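(* Suppose $H$ satisfies (B1) and (B2), and for $\alpha>0$ let $v^\alpha\in C(\mathbb{T}^d)\otimes\mathcal{B}(I)$ be the viscosity solution of (DP) (the one constructed by Perron's method, which satisfies $-M/\alpha\le v^\alpha\le M/\alpha$ with $M:=\sup_{\mathbb{T}^d\times I}|H(x,0,\xi)|$). Then for each $\alpha>0$ there exists $L_\alpha>0$ such that $|v^\alpha(x,\xi)-v^\alpha(y,\xi)|\le L_\alpha|x-y|$ for all $x,y\in\mathbb{T}^d$, $\xi\in I$.
   Context: $I\subset\mathbb{R}$ finite interval, $|I|=1$; $k$ Borel measurable on $I\times I$ with $0<k_0\le k\le k_1$. $H\in C(\mathbb{T}^d\times\mathbb{R}^d)\otimes\mathcal{B}(I)$ with $H(\cdot,p,\cdot)$ bounded for each $p$. (DP): $\alpha v(x,\xi)+H(x,Dv(x,\xi),\xi)+\int_I k(\xi,\eta)(v(x,\xi)-v(x,\eta))d\eta=0$ in $\mathbb{T}^d\times I$, understood in the viscosity sense (test functions $\phi\in C^1(\mathbb{T}^d)$ touching $v(\cdot,\xi)$ for fixed $\xi$). (B1): $C_1|p|^m-C_2\le H(x,p,\xi)$ for constants $C_1,C_2>0$, $m>1$. (B2): for each $R>0$ a modulus $\omega_R$ with $|H(x,p,\xi)-H(y,p,\xi)|\le\omega_R(|x-y|)$ for $|p|\le R$. $C(\mathbb{T}^d)\otimes\mathcal{B}(I)$: functions continuous in $x$ for each $\xi$ and Borel in $\xi$ for each $x$. *)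

(* Defs.v *)
From HB Require Import structures.
From mathcomp Require Import all_boot all_order all_algebra.
From mathcomp Require Import all_classical all_reals all_analysis.
Set Implicit Arguments. Unset Strict Implicit. Unset Printing Implicit Defensive.
Import Order.TTheory GRing.Theory Num.Theory.
Import numFieldNormedType.Exports.
Local Open Scope classical_set_scope.
Local Open Scope ring_scope.

(* Points of R^d are row vectors; functions on T^d = R^d/Z^d are represented
   by Z^d-periodic functions on R^d. *)

Definition enorm (R : realType) (d : nat) (x : 'rV[R]_d) : R :=
  Num.sqrt (\sum_(i < d) x ord0 i ^+ 2).

Definition periodic (R : realType) (d : nat) (T : Type) (f : 'rV[R]_d -> T) :=
  forall (x : 'rV[R]_d) (z : 'rV[int]_d), f (x + map_mx (fun n : int => n%:~R) z) = f x.

Definition grad (R : realType) (d : nat) (phi : 'rV[R]_d -> R) (x : 'rV[R]_d)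
  : 'rV[R]_d := \row_(i < d) ('D_(delta_mx 0 i) phi x).

Definition C1_torus (R : realType) (d : nat) (phi : 'rV[R]_d -> R) :=
  periodic phi /\ (forall x, differentiable phi x) /\ continuous (grad phi).

Definition modulus (R : realType) (w : R -> R) :=
  w 0 = 0 /\ (forall r, 0 <= r -> 0 <= w r) /\
  (forall r s, 0 <= r -> r <= s -> w r <= w s) /\
  (w r @[r --> 0^'+] --> 0).

Definition hamiltonian_class (R : realType) (d : nat) (I : set R)
    (H : 'rV[R]_d -> 'rV[R]_d -> R -> R) :=
  (forall xi, I xi -> continuous (fun xp : 'rV[R]_d * 'rV[R]_d => H xp.1 xp.2 xi)) /\
  (forall x p, measurable_fun I (H x p)) /\
  (forall p xi, periodic (fun x => H x p xi)) /\
  (forall p, exists C : R, forall x xi, I xi -> `|H x p xi| <= C).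

Definition B1 (R : realType) (d : nat) (I : set R)
    (H : 'rV[R]_d -> 'rV[R]_d -> R -> R) :=
  exists C1 C2 m : R, 0 < C1 /\ 0 < C2 /\ 1 < m /\
    forall x p xi, I xi -> C1 * (enorm p `^ m) - C2 <= H x p xi.

Definition B2 (R : realType) (d : nat) (I : set R)
    (H : 'rV[R]_d -> 'rV[R]_d -> R -> R) :=
  forall R0 : R, 0 < R0 -> exists w : R -> R, modulus w /\
    forall x y p xi, I xi -> enorm p <= R0 ->
      `|H x p xi - H y p xi| <= w (enorm (x - y)).

Definition CxB (R : realType) (d : nat) (I : set R) (v : 'rV[R]_d -> R -> R) :=
  (forall xi, I xi -> continuous (fun x => v x xi)) /\
  (forall x, measurable_fun I (v x)) /\
  (forall xi, periodic (fun x => v x xi)).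

Definition coupling (R : realType) (d : nat) (I : set R) (k : R -> R -> R)
    (v : 'rV[R]_d -> R -> R) (x : 'rV[R]_d) (xi : R) : \bar R :=
  (\int[lebesgue_measure]_(eta in I) (k xi eta * (v x xi - v x eta))%:E)%E.

Definition visc_sub (R : realType) (d : nat) (I : set R) (k : R -> R -> R)
    (H : 'rV[R]_d -> 'rV[R]_d -> R -> R) (alpha : R) (v : 'rV[R]_d -> R -> R) :=
  forall (xi : R) (phi : 'rV[R]_d -> R) (x0 : 'rV[R]_d), I xi -> C1_torus phi ->
    (\forall y \near x0, v y xi - phi y <= v x0 xi - phi x0) ->
    ((alpha * v x0 xi + H x0 (grad phi x0) xi)%:E + coupling I k v x0 xi <= 0)%E.

Definition visc_super (R : realType) (d : nat) (I : set R) (k : R -> R -> R)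
    (H : 'rV[R]_d -> 'rV[R]_d -> R -> R) (alpha : R) (v : 'rV[R]_d -> R -> R) :=
  forall (xi : R) (phi : 'rV[R]_d -> R) (x0 : 'rV[R]_d), I xi -> C1_torus phi ->
    (\forall y \near x0, v x0 xi - phi x0 <= v y xi - phi y) ->
    (0 <= (alpha * v x0 xi + H x0 (grad phi x0) xi)%:E + coupling I k v x0 xi)%E.

Definition visc_sol (R : realType) (d : nat) (I : set R) (k : R -> R -> R)
    (H : 'rV[R]_d -> 'rV[R]_d -> R -> R) (alpha : R) (v : 'rV[R]_d -> R -> R) :=
  CxB I v /\ visc_sub I k H alpha v /\ visc_super I k H alpha v.

Definition Msup (R : realType) (d : nat) (I : set R)
    (H : 'rV[R]_d -> 'rV[R]_d -> R -> R) : R :=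
  sup [set r : R | exists x xi, I xi /\ r = `|H x 0 xi|].

(* Main.v *)
Require Import Defs.
From HB Require Import structures.
From mathcomp Require Import all_boot all_order all_algebra.
From mathcomp Require Import all_classical all_reals all_analysis.
From mathcomp Require Import ring lra measurable_realfun.
Set Implicit Arguments. Unset Strict Implicit. Unset Printing Implicit Defensive.
Import Order.TTheory GRing.Theory Num.Theory.
Import numFieldNormedType.Exports.
Local Open Scope classical_set_scope.
Local Open Scope ring_scope.
Lemma sin2_shiftn (R : realType) (y : R) (n : nat) : sin (y + pi *+ n) ^+ 2 = sin y ^+ 2.
Proof.
elim: n => [|n IH]; first by rewrite mulr0n addr0.
rewrite mulrS addrCA addrC.
by have -> := @sinDpi R (y + pi *+ n); rewrite sqrrN.
Qed.

Lemma sin2_shift (R : realType) (y : R) (n : int) : sin (y + n%:~R * pi) ^+ 2 = sin y ^+ 2.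
Proof.
case: n => [n|n].
  by rewrite -[(Posz n)%:~R]/(n%:R) mulr_natl sin2_shiftn.
rewrite NegzE mulrNz mulNr -[(Posz n.+1)%:~R]/(n.+1%:R) mulr_natl.
by rewrite -[in RHS](subrK (pi *+ n.+1) y) sin2_shiftn.
Qed.

Lemma abs_sin_le (R : realType) (y : R) : `|sin y| <= `|y|.
Proof.
wlog y0 : y / 0 <= y.
  move=> H; case: (leP 0 y) => [/H//|y0].
  by rewrite -normrN -sinN -(normrN y) H // oppr_ge0 ltW.
case: (eqVneq y 0) => [->|yn0]; first by rewrite sin0 normr0.
have yp : 0 < y by rewrite lt_neqAle eq_sym yn0.
have [c _ hc] := @MVT R sin cos 0 y yp (fun x _ => is_derive_sin x)
   (continuous_subspaceT (@continuous_sin R)).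
rewrite sin0 subr0 subr0 in hc.
rewrite hc normrM (ger0_norm y0) ler_piMl //; exact: cos_max.
Qed.

Definition Gf (R : realType) (c t : R) : R := sin (pi * (t - c)) ^+ 2.
Definition dGf (R : realType) (c t : R) : R :=
  2 * sin (pi * (t - c)) * cos (pi * (t - c)) * pi.

Lemma is_derive_Gf (R : realType) (c t : R) : is_derive t 1 (Gf c) (dGf c t).
Proof.
pose h := fun t : R => pi * (t - c).
have hd : is_derive t 1 h pi.
  have h1 : is_derive t (1:R) (fun t : R => t - c) 1.
    have := is_deriveB (is_derive_id t 1) (@is_derive_cst R R R c t 1).
    by rewrite subr0.
  have -> : h = pi \*: (fun t : R => t - c) by apply/funext.
  by have := is_deriveZ pi h1; rewrite [X in is_derive _ _ _ X]/GRing.scale /= mulr1.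
have sd : is_derive t 1 (sin \o h) (cos (h t) * pi).
  exact: is_derive1_comp.
have -> : Gf c = (sin \o h) * (sin \o h).
  by apply/funext => s; rewrite /Gf /= expr2.
have := is_deriveM sd sd.
move/is_derive_eq; apply.
rewrite /dGf /h /= /GRing.scale /=; ring.
Qed.

Lemma chainD (R : realType) d (f : 'rV[R]_d -> R) (g : R -> R) (w v : 'rV[R]_d) (g' : R) :
  differentiable f w -> is_derive (f w) 1 g g' ->
  differentiable (g \o f) w /\ 'D_v (g \o f) w = g' * 'D_v f w.
Proof.
move=> df gd.
have dg : differentiable g (f w) by apply/derivable1_diffP; exact: ex_derive.
have dgf : differentiable (g \o f) w by exact: differentiable_comp.
split=> //.
rewrite deriveE // diff_comp // /= deriv1E ?derive1E; last exact: ex_derive.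
by rewrite derive_val -deriveE // mulrC.
Qed.

Lemma derive_coord (R : realType) d (j : 'I_d) (w v : 'rV[R]_d) :
  'D_v (fun t : 'rV[R]_d => t ord0 j) w = v ord0 j.
Proof.
have := @derive_mx R _ 1 d id w v (@derivable_id _ _ w v).
rewrite derive_id => /(congr1 (fun M : 'rV[R]_d => M ord0 j)).
by rewrite mxE.
Qed.

Definition Sf (R : realType) d (x w : 'rV[R]_d) : R :=
  \sum_(j < d) Gf (x ord0 j) (w ord0 j).
Definition phif (R : realType) d (A e : R) (x w : 'rV[R]_d) : R :=
  A * Num.sqrt (e ^+ 2 + Sf x w).

Lemma Gterm (R : realType) d (x w v : 'rV[R]_d) (j : 'I_d) :
  differentiable (fun t : 'rV[R]_d => Gf (x ord0 j) (t ord0 j)) w /\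
  'D_v (fun t : 'rV[R]_d => Gf (x ord0 j) (t ord0 j)) w =
     dGf (x ord0 j) (w ord0 j) * v ord0 j.
Proof.
have := @chainD R d (fun t : 'rV[R]_d => t ord0 j) (Gf (x ord0 j)) w v _
  (differentiable_coord w ord0 j) (is_derive_Gf _ _).
by rewrite derive_coord.
Qed.

Lemma Sterm (R : realType) d (x w v : 'rV[R]_d) :
  differentiable (Sf x) w /\
  'D_v (Sf x) w = \sum_(j < d) dGf (x ord0 j) (w ord0 j) * v ord0 j.
Proof.
have -> : Sf x = \sum_(j < d) (fun t : 'rV[R]_d => Gf (x ord0 j) (t ord0 j)).
  by apply/funext => t; rewrite /Sf fct_sumE.
split.
  by apply: differentiable_sum => j; case: (Gterm x w v j).
rewrite derive_sum; last by move=> j; apply: diff_derivable; case: (Gterm x w v j).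
by apply: eq_bigr => j _; case: (Gterm x w v j).
Qed.

Lemma outer_derive (R : realType) (A s : R) : 0 < s ->
  is_derive s 1 (fun s : R => A * Num.sqrt s) (A * (2 * Num.sqrt s)^-1).
Proof.
move=> s0; have := is_deriveZ A (is_derive1_sqrt s0).
by move/is_derive_eq; apply.
Qed.

Lemma Tterm (R : realType) d (e : R) (x w v : 'rV[R]_d) :
  differentiable (fun t => e ^+ 2 + Sf x t) w /\
  'D_v (fun t => e ^+ 2 + Sf x t) w = \sum_(j < d) dGf (x ord0 j) (w ord0 j) * v ord0 j.
Proof.
have [dS DS] := Sterm x w v.
have -> : (fun t => e ^+ 2 + Sf x t) = cst (e ^+ 2) + Sf x by apply/funext.
split; first by apply: differentiableD.
rewrite deriveD //; last exact: diff_derivable.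
by rewrite derive_cst add0r.
Qed.

Lemma Sf_ge0 (R : realType) d (x w : 'rV[R]_d) : 0 <= Sf x w.
Proof. by apply: sumr_ge0 => j _; rewrite /Gf sqr_ge0. Qed.

Lemma phi_derive (R : realType) d (A e : R) (x w v : 'rV[R]_d) : 0 < e ->
  differentiable (phif A e x) w /\
  'D_v (phif A e x) w = A * (2 * Num.sqrt (e ^+ 2 + Sf x w))^-1 *
     \sum_(j < d) dGf (x ord0 j) (w ord0 j) * v ord0 j.
Proof.
move=> e0.
have [dT DT] := Tterm e x w v.
have Tpos : 0 < e ^+ 2 + Sf x w by apply: ltr_pwDl; [exact: exprn_gt0|exact: Sf_ge0].
have := @chainD R d _ _ w v _ dT (outer_derive A Tpos).
by rewrite DT.
Qed.

Lemma grad_phi (R : realType) d (A e : R) (x w : 'rV[R]_d) : 0 < e ->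
  grad (phif A e x) w =
  \row_i (A * (2 * Num.sqrt (e ^+ 2 + Sf x w))^-1 * dGf (x ord0 i) (w ord0 i)).
Proof.
move=> e0; apply/rowP => i; rewrite !mxE.
have [_ ->] := phi_derive A x w (delta_mx 0 i) e0.
congr (_ * _); rewrite (bigD1 i) //= big1 ?addr0.
  by rewrite mxE eqxx /= mulr1.
by move=> j ji; rewrite mxE (negbTE ji) andbF mulr0.
Qed.

Lemma Sf_continuous (R : realType) d (x : 'rV[R]_d) : continuous (Sf x).
Proof.
move=> w; apply: differentiable_continuous.
by case: (Sterm x w 0).
Qed.

Lemma dG_continuous (R : realType) d (x : 'rV[R]_d) (i : 'I_d) :
  continuous (fun t : 'rV[R]_d => dGf (x ord0 i) (t ord0 i)).
Proof.
move=> w; rewrite /dGf.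
have hc : {for w, continuous (fun t : 'rV[R]_d => pi * (t ord0 i - x ord0 i))}.
  apply: (@continuousM _ _ (fun=> pi) (fun t : 'rV[R]_d => t ord0 i - x ord0 i)).
    exact: cst_continuous.
  apply: (@continuousD _ _ _ (fun t : 'rV[R]_d => t ord0 i) (fun=> - x ord0 i)).
    exact: coord_continuous.
  exact: cst_continuous.
apply: (@continuousM _ _ (fun t : 'rV[R]_d => 2 * sin (pi * (t ord0 i - x ord0 i)) * cos (pi * (t ord0 i - x ord0 i))) (fun=> pi)); last exact: cst_continuous.
apply: (@continuousM _ _ (fun t : 'rV[R]_d => 2 * sin (pi * (t ord0 i - x ord0 i))) (fun t : 'rV[R]_d => cos (pi * (t ord0 i - x ord0 i)))); last first.
  exact: (continuous_comp hc (@continuous_cos R _)).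
apply: (@continuousM _ _ (fun=> 2) (fun t : 'rV[R]_d => sin (pi * (t ord0 i - x ord0 i)))); first exact: cst_continuous.
exact: (continuous_comp hc (@continuous_sin R _)).
Qed.

Lemma row_continuous (R : realType) d (T : topologicalType) (f : 'I_d -> T -> R) :
  (forall i, continuous (f i)) -> continuous (fun t => \row_i f i t).
Proof.
move=> fc t A /= [P hP sPA].
have : \forall s \near t, forall (i : 'I_1) (j : 'I_d), P i j (f j s).
  apply: filter_forall => i; apply: filter_forall => j.
  apply: (fc j t); have := hP i j; by rewrite mxE.
apply: filterS => s Hs; apply: sPA => i j /=; rewrite mxE; exact: Hs.
Qed.

Lemma Sf_periodic (R : realType) d (x w : 'rV[R]_d) (z : 'rV[int]_d) :
  Sf x (w + map_mx (fun n : int => n%:~R) z) = Sf x w.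
Proof.
apply: eq_bigr => j _; rewrite !mxE /Gf.
have -> : pi * (w ord0 j + (z ord0 j)%:~R - x ord0 j) =
   pi * (w ord0 j - x ord0 j) + (z ord0 j)%:~R * pi by ring.
exact: sin2_shift.
Qed.

Lemma phi_C1 (R : realType) d (A e : R) (x : 'rV[R]_d) : 0 < e ->
  C1_torus (phif A e x).
Proof.
move=> e0; split; [|split].
- by move=> w z; rewrite /phif Sf_periodic.
- by move=> w; case: (phi_derive A x w 0 e0).
- have -> : grad (phif A e x) = fun w => \row_i (A * (2 * Num.sqrt (e ^+ 2 + Sf x w))^-1 * dGf (x ord0 i) (w ord0 i)).
    by apply/funext => w; exact: grad_phi.
  apply: row_continuous => i w.
  have Tc : {for w, continuous (fun t => e ^+ 2 + Sf x t)}.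
    apply: (@continuousD _ _ _ (fun=> e ^+ 2) (Sf x)); first exact: cst_continuous.
    exact: Sf_continuous.
  have Tpos : 0 < e ^+ 2 + Sf x w by apply: ltr_pwDl; [exact: exprn_gt0|exact: Sf_ge0].
  have sc : {for w, continuous (fun t => 2 * Num.sqrt (e ^+ 2 + Sf x t))}.
    apply: (@continuousM _ _ (fun=> 2) (fun t => Num.sqrt (e ^+ 2 + Sf x t))).
      exact: cst_continuous.
    exact: (continuous_comp Tc (@sqrt_continuous R _)).
  apply: (@continuousM _ _ (fun t => A * (2 * Num.sqrt (e ^+ 2 + Sf x t))^-1)
     (fun t => dGf (x ord0 i) (t ord0 i))); last exact: dG_continuous.
  apply: (@continuousM _ _ (fun=> A) (fun t => (2 * Num.sqrt (e ^+ 2 + Sf x t))^-1)).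
    exact: cst_continuous.
  apply: continuousV => //.
  by rewrite mulf_neq0 // gt_eqF // sqrtr_gt0.
Qed.

Lemma periodic_max (R : realType) d (F : 'rV[R]_d -> R) (x : 'rV[R]_d) :
  continuous F -> Defs.periodic F ->
  exists2 w0 : 'rV[R]_d, (forall j, `|w0 ord0 j - x ord0 j| <= 2^-1) &
     forall w, F w <= F w0.
Proof.
move=> Fc Fp.
pose B := [set w : 'rV[R]_d | forall j, `[x ord0 j - 2^-1, x ord0 j + 2^-1]%classic (w ord0 j)].
have Bc : compact B.
  have := @rV_compact R d (fun j => `[x ord0 j - 2^-1, x ord0 j + 2^-1]%classic)
            (fun j => @segment_compact R (x ord0 j - 2^-1) (x ord0 j + 2^-1)).
  exact.
have B0 : B !=set0.
  exists x => j /=; rewrite in_itv /=.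
  have : (0:R) <= 2^-1 by rewrite invr_ge0 ler0n.
  move=> h; apply/andP; split; lra.
have [c cB cmax] := EVT_max_rV B0 Bc (continuous_subspaceT Fc).
have inB w : B w -> forall j, `|w ord0 j - x ord0 j| <= 2^-1.
  move=> Bw j; have := Bw j; rewrite /= in_itv /= => /andP[h1 h2].
  rewrite ler_norml; apply/andP; split; lra.
exists c; first by apply: inB; move: cB; rewrite inE.
move=> w.
pose z : 'rV[int]_d := \row_j (- Num.floor (w ord0 j - x ord0 j + 2^-1)).
rewrite -(Fp w z); apply: cmax; rewrite inE => j /=.
rewrite !mxE in_itv /=.
have := floor_itv (w ord0 j - x ord0 j + 2^-1).
set n := Num.floor _; rewrite intrD => /andP[h1 h2].
rewrite mulrNz; apply/andP; split; lra.
Qed.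

Lemma Sf_xx (R : realType) d (x : 'rV[R]_d) : Sf x x = 0.
Proof. by apply: big1 => j _; rewrite /Gf subrr mulr0 sin0 expr0n. Qed.

Lemma Gf_le_Sf (R : realType) d (x w : 'rV[R]_d) (j : 'I_d) :
  Gf (x ord0 j) (w ord0 j) <= Sf x w.
Proof.
rewrite /Sf (bigD1 j) //= lerDl; apply: sumr_ge0 => i _; exact: sqr_ge0.
Qed.

Lemma Sf_le (R : realType) d (x w : 'rV[R]_d) :
  Sf x w <= pi ^+ 2 * \sum_(j < d) (w ord0 j - x ord0 j) ^+ 2.
Proof.
rewrite mulr_sumr; apply: ler_sum => j _; rewrite /Gf -exprMn.
rewrite -[X in X <= _]ger0_norm ?sqr_ge0 // -[X in _ <= X]ger0_norm ?sqr_ge0 //.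
rewrite !normrX lerXn2r ?nnegrE ?normr_ge0 //; exact: abs_sin_le.
Qed.

Lemma sqrt_add_le (R : realType) (a b : R) : 0 <= a -> 0 <= b ->
  Num.sqrt (a + b) <= Num.sqrt a + Num.sqrt b.
Proof.
move=> a0 b0.
have sa := sqrtr_ge0 a; have sb := sqrtr_ge0 b.
rewrite -[X in _ <= X]ger0_norm ?addr_ge0 // -sqrtr_sqr ler_sqrt ?sqr_ge0 //.
have ea := sqr_sqrtr a0; have eb := sqr_sqrtr b0.
rewrite -{1}ea -{1}eb; nra.
Qed.

Lemma sqrt_Sf_le (R : realType) d (e : R) (x w : 'rV[R]_d) : 0 <= e ->
  Num.sqrt (e ^+ 2 + Sf x w) <= e + pi * enorm (w - x).
Proof.
move=> e0.
apply: le_trans (sqrt_add_le (sqr_ge0 e) (Sf_ge0 x w)) _.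
rewrite sqrtr_sqr ger0_norm // lerD2l /enorm.
under [X in _ <= _ * Num.sqrt X]eq_bigr do rewrite !mxE.
rewrite -[X in _ <= X * _]ger0_norm ?pi_ge0 // -sqrtr_sqr -sqrtrM ?sqr_ge0 //.
rewrite ler_sqrt; last by apply: mulr_ge0; [exact: sqr_ge0|apply: sumr_ge0 => j _; exact: sqr_ge0].
exact: Sf_le.
Qed.

Lemma visc_lip (R : realType) d (u : 'rV[R]_d -> R) (K B : R) :
  0 < K -> 0 <= B -> continuous u -> Defs.periodic u -> (forall w, `|u w| <= B) ->
  (forall (phi : 'rV[R]_d -> R) x0, C1_torus phi ->
     (\forall y \near x0, u y - phi y <= u x0 - phi x0) -> enorm (grad phi x0) <= K) ->
  forall x w, u w - u x <= (K + 8 * B + 1) * pi * enorm (w - x).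
Proof.
move=> K0 B0 uc up ub Kb x w.
set A := K + 8 * B + 1.
have A0 : 0 < A by rewrite /A; lra.
apply/ler_addgt0Pr => eta eta0.
have [δ δ0 Hδ] : exists2 δ : R, 0 < δ & forall y : 'rV[R]_d,
    (forall j, `|y ord0 j - x ord0 j| < δ) -> `|u x - u y| < eta.
  move/cvgrPdist_lt: (uc x) => /(_ eta eta0) /nbhs_ballP [δ δ0 Hb].
  exists δ => // y Hy; apply: Hb.
  rewrite /ball /=; split => // i j; rewrite ord1 /ball /= distrC; exact: Hy.
have asin0 : asin (0:R) = 0.
  by rewrite -{1}sin0 sinK // in_itv /= oppr_le0 divr_ge0 ?pi_ge0 ?ler0n.
have [δ' δ'0 Hδ'] : exists2 δ' : R, 0 < δ' & forall s : R,
    `|s| < δ' -> `|asin s| < pi * δ.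
  have : -1 < (0:R) < 1 by rewrite ltrN10 ltr01.
  move/continuous_asin => H.
  have := (cvgrPdist_lt _ _).1 H (pi * δ) (mulr_gt0 (@pi_gt0 R) δ0).
  rewrite asin0 => H2; have [r r0 Hr] := (nbhs_ballP _ _).1 (H2 (nbhs_filter _)).
  exists r => // s hs; have := Hr s; rewrite /ball /= !sub0r !normrN; exact.
have [e [e0 [e14 ed]]] : exists e : R, 0 < e /\ e <= 4^-1 /\ e < δ'.
  case: (leP (4^-1) (δ' / 2)) => h.
    by exists 4^-1; split; [rewrite invr_gt0 ltr0n|split; lra].
  by exists (δ' / 2); split; [rewrite divr_gt0 // ltr0n|split; lra].
pose phi := phif A e x.
have phiC : C1_torus phi by exact: phi_C1.
pose F := fun y => u y - phi y.
have Fc : continuous F.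
  move=> y; apply: (@continuousD _ _ _ u (fun t => - phi t)); first exact: uc.
  apply: continuousN; apply: differentiable_continuous.
  by case: phiC => _ [].
have Fp : Defs.periodic F by move=> y z; rewrite /F up /phi /phif Sf_periodic.
have [w0 w0b w0max] := periodic_max x Fc Fp.
have Kg : enorm (grad phi w0) <= K.
  apply: Kb => //; apply: filterE => y; exact: w0max.
set S0 := Sf x w0.
have S0ge : 0 <= S0 by exact: Sf_ge0.
set g0 := Num.sqrt (e ^+ 2 + S0).
have g0sq : g0 ^+ 2 = e ^+ 2 + S0 by rewrite sqr_sqrtr // addr_ge0 // sqr_ge0.
have g0ge : 0 <= g0 := sqrtr_ge0 _.
have g0pos : 0 < g0 by rewrite sqrtr_gt0; apply: ltr_pwDl => //; exact: exprn_gt0.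
have phix : phi x = A * e by rewrite /phi /phif Sf_xx addr0 sqrtr_sqr ger0_norm // ltW.
have phiw0 : phi w0 = A * g0 by [].
have hx := w0max x; rewrite /F phix phiw0 in hx.
have := ub x; have := ub w0; rewrite !ler_norml => /andP[b1 b2] /andP[b3 b4].
have g0e : g0 - e <= 4^-1.
  have h2 : A * (g0 - e) <= 2 * B by lra.
  have h3 : 8 * B + 1 <= A by rewrite /A; lra.
  nra.
have S0q : S0 <= 4^-1 by nra.
have sj j : sin (pi * (w0 ord0 j - x ord0 j)) ^+ 2 <= S0.
  exact: (Gf_le_Sf x w0 j).
pose t j := A * (2 * g0)^-1 * dGf (x ord0 j) (w0 ord0 j).
have tsum : \sum_(j < d) t j ^+ 2 <= K ^+ 2.
  move: Kg; rewrite /phi grad_phi // /enorm.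
  under eq_bigr do rewrite mxE.
  set Sg := \sum_(j < d) _.
  have Sg0 : 0 <= Sg by apply: sumr_ge0 => j _; exact: sqr_ge0.
  have := sqr_sqrtr Sg0; have := sqrtr_ge0 Sg.
  rewrite /Sg /t => h1 h2 h3.
  nra.
have tlow : A ^+ 2 * pi ^+ 2 / 2 * S0 <= g0 ^+ 2 * \sum_(j < d) t j ^+ 2.
  rewrite /S0 /Sf mulr_sumr mulr_sumr; apply: ler_sum => j _.
  rewrite /Gf /t /dGf.
  set s := sin _; set c := cos _.
  have cs : c ^+ 2 = 1 - s ^+ 2 by rewrite /c /s cos2sin2.
  have ss : s ^+ 2 <= 4^-1 by apply: le_trans (sj j) S0q.
  have -> : g0 ^+ 2 * (A * (2 * g0)^-1 * (2 * s * c * pi)) ^+ 2 =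
     (A * s * c * pi) ^+ 2.
    by field; rewrite gt_eqF.
  have pi0 := @pi_ge0 R.
  nra.
have S0e : S0 <= e ^+ 2.
  have pi2 := @pi_ge2 R.
  have hK : 2 * K ^+ 2 <= A ^+ 2 * pi ^+ 2 / 2.
    have hA : K + 1 <= A by rewrite /A; lra.
    have a1 : K ^+ 2 <= A ^+ 2 by nra.
    have a2 : 4 * A ^+ 2 <= A ^+ 2 * pi ^+ 2.
      have p4 : 4 <= pi ^+ 2 :> R by nra.
      rewrite mulrC; apply: ler_wpM2l => //; exact: sqr_ge0.
    lra.
  have h4 : A ^+ 2 * pi ^+ 2 / 2 * S0 <= K ^+ 2 * (e ^+ 2 + S0).
    rewrite -g0sq; apply: le_trans tlow _; rewrite mulrC.
    by apply: ler_wpM2r => //; exact: sqr_ge0.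
  have h5 : 2 * K ^+ 2 * S0 <= A ^+ 2 * pi ^+ 2 / 2 * S0 by apply: ler_wpM2r.
  have h6 : K ^+ 2 * S0 <= K ^+ 2 * e ^+ 2 by lra.
  by rewrite -(ler_pM2l (exprn_gt0 2 K0)).
have uw0 : `|u x - u w0| < eta.
  apply: Hδ => j.
  have hs : `|sin (pi * (w0 ord0 j - x ord0 j))| < δ'.
    have h := le_trans (sj j) S0e.
    apply: le_lt_trans ed; rewrite ler_norml; apply/andP; split; nra.
  have := Hδ' _ hs.
  have pi0 := @pi_gt0 R.
  rewrite sinK; last first.
    have := w0b j; rewrite ler_norml => /andP[h1 h2].
    rewrite in_itv /=; apply/andP; split; nra.
  by rewrite normrM (gtr0_norm pi0) ltr_pM2l.
have hw := w0max w; rewrite /F phiw0 /phi /phif in hw.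
have gw := sqrt_Sf_le x w (ltW e0).
have g0e' : e <= g0 by nra.
have hA : A * Num.sqrt (e ^+ 2 + Sf x w) <= A * (e + pi * enorm (w - x)).
  by apply: ler_wpM2l => //; exact: ltW.
move: uw0; rewrite distrC ltr_norml => /andP[_ h7].
have h8 : A * e <= A * g0 by apply: ler_wpM2l => //; exact: ltW.
lra.
Qed.
Lemma meas_I (R : realType) (a : R) (I : set R) :
  `]a, a + 1[ `<=` I -> I `<=` `[a, a + 1] -> measurable I.
Proof.
move=> I1 I2.
have -> : I = [set` `]a, a + 1[] `|` ([set y | y = a /\ I a] `|` [set y | y = a + 1 /\ I (a + 1)]).
  apply/seteqP; split => y.
    move=> Iy; have := I2 y Iy; rewrite /= in_itv /= => /andP[h1 h2].
    case: (eqVneq y a) => [ya|ya]; first by right; left; split => //; rewrite -ya.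
    case: (eqVneq y (a + 1)) => [ya1|ya1]; first by right; right; split => //; rewrite -ya1.
    left; rewrite /= in_itv /=; apply/andP; split; rewrite lt_neqAle.
      by rewrite eq_sym ya h1.
    by rewrite ya1 h2.
  case => [/I1 //|[[-> //]|[-> //]]].
apply: measurableU; first exact: measurable_itv.
have m1 (b : R) : measurable [set y | y = b /\ I b].
  case: (pselect (I b)) => h.
    have -> : [set y | y = b /\ I b] = [set b] by apply/seteqP; split => y /= [] //.
    exact: measurable_set1.
  have -> : [set y | y = b /\ I b] = set0 by apply/seteqP; split => y /= [] //.
  exact: measurable0.
by apply: measurableU; apply: m1.
Qed.

Lemma coupling_lb (R : realType) d (a : R) (I : set R) (k : R -> R -> R) (k0 k1 : R)
    (v : 'rV[R]_d -> R -> R) (x : 'rV[R]_d) (xi C : R) :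
  `]a, a + 1[ `<=` I -> I `<=` `[a, a + 1] ->
  measurable_fun (I `*` I) (fun z : R * R => k z.1 z.2) ->
  0 < k0 -> (forall xi eta, I xi -> I eta -> k0 <= k xi eta <= k1) ->
  measurable_fun I (v x) -> I xi ->
  (forall eta, I eta -> - C <= v x eta <= C) ->
  ((- (2 * k1 * C))%:E <= coupling I k v x xi)%E.
Proof.
move=> I1 I2 mk k00 kb mv Ixi vb.
have mI := meas_I I1 I2.
have [C0 k10] : 0 <= C /\ 0 <= k1.
  have := vb xi Ixi; have := kb xi xi Ixi Ixi; move=> /andP[h1 h2] /andP[h3 h4].
  split; lra.
pose f := fun eta => (k xi eta * (v x xi - v x eta))%:E.
have mkxi : measurable_fun I (k xi).
  have := @measurable_comp _ _ _ _ _ _ (I `*` I) (fun z : R * R => k z.1 z.2) I (pair xi)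
    (measurableX mI mI).
  apply => //; first by move=> _ [y Iy <-]; split.
  exact: (measurable_funS measurableT) => //.
have mf : measurable_fun I (EFin \o (fun eta => k xi eta * (v x xi - v x eta))).
  apply/measurable_EFinP.
  apply: measurable_realfun.measurable_funM => //.
  apply: measurable_realfun.measurable_funB => //; exact: measurable_cst.
have mf' : measurable_fun I f := mf.
rewrite /coupling integralE.
have h1 : (0 <= \int[lebesgue_measure]_(eta in I) f^\+ eta)%E.
  by apply: integral_ge0 => eta _; exact: funepos_ge0.
have h2 : (\int[lebesgue_measure]_(eta in I) f^\- eta <= (2 * k1 * C)%:E)%E.
  have h2a : (\int[lebesgue_measure]_(eta in I) f^\- eta <=
     \int[lebesgue_measure]_(eta in I) (cst (2 * k1 * C)%:E) eta)%E.
    have := (ge0_le_integral lebesgue_measure mI (fun eta _ => funeneg_ge0 f eta) (measurable_funeneg mf')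
      (measurable_cst _)).
    apply => eta Ieta; rewrite funenegE /= /f; rewrite ge_max; apply/andP; split.
      rewrite lee_fin.
      have := vb eta Ieta; have := vb xi Ixi; have := kb xi eta Ixi Ieta.
      move=> /andP[h3 h4] /andP[h5 h6] /andP[h7 h8]; nra.
    by rewrite lee_fin; apply: mulr_ge0 => //; apply: mulr_ge0.
  apply: le_trans h2a _.
  rewrite integral_cst //.
  have hI : (lebesgue_measure I <= 1)%E.
    apply: (@le_trans _ _ (lebesgue_measure [set` `[a, a + 1]])).
      apply: le_measure => //; rewrite inE //; exact: measurable_itv.
    rewrite lebesgue_measure_itv /= lte_fin ltrDl ltr01 -EFinD addrAC subrr add0r.
    by [].
  have hC : (0 <= (2 * k1 * C)%:E)%E by rewrite lee_fin; apply: mulr_ge0 => //; apply: mulr_ge0.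
  rewrite -[X in (_ <= X)%E]mule1.
  apply: lee_wpmul2l => //.
have := leeB h1 h2; rewrite sub0e -EFinN; exact.
Qed.

Lemma enormN (R : realType) d (x y : 'rV[R]_d) : enorm (y - x) = enorm (x - y).
Proof. by rewrite /enorm; congr Num.sqrt; apply: eq_bigr => j _; rewrite !mxE -sqrrN opprB. Qed.

Unset Implicit Arguments.
Set Strict Implicit.

Theorem mainTheorem5 (R : realType) (d : nat) (a : R) (I : set R)
    (k : R -> R -> R) (k0 k1 : R) (H : 'rV[R]_d -> 'rV[R]_d -> R -> R) :
  `]a, a + 1[ `<=` I -> I `<=` `[a, a + 1] ->
  measurable_fun (I `*` I) (fun z : R * R => k z.1 z.2) ->
  0 < k0 -> (forall xi eta, I xi -> I eta -> k0 <= k xi eta <= k1) ->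
  hamiltonian_class I H -> B1 I H -> B2 I H ->
  forall (alpha : R) (v : 'rV[R]_d -> R -> R), 0 < alpha ->
    visc_sol I k H alpha v ->
    (forall x xi, I xi -> - (Msup I H / alpha) <= v x xi <= Msup I H / alpha) ->
    exists L : R, 0 < L /\
      forall (x y : 'rV[R]_d) (xi : R), I xi ->
        `|v x xi - v y xi| <= L * enorm (x - y).
Proof.
move=> I1 I2 mk k00 kb _ [C1 [C2 [m [C10 [C20 [m1 HB1]]]]]] _ alpha v al0.
move=> [[vc [vm vp]] [vsub _]] vb.
set Bd := Msup I H / alpha.
have Ia : I (a + 2^-1).
  apply: I1; rewrite /= in_itv /=; apply/andP; split.
    by rewrite ltrDl invr_gt0 ltr0n.
  by rewrite ltrD2l invf_lt1 // ?ltr0n // ltr1n.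
have Bd0 : 0 <= Bd by have := vb 0 _ Ia; rewrite -/Bd => /andP[h1 h2]; lra.
have k10 : 0 <= k1 by have := kb _ _ Ia Ia => /andP[h1 h2]; lra.
set Q := (C2 + alpha * Bd + 2 * k1 * Bd) / C1.
have Q0 : 0 <= Q.
  apply: divr_ge0; last exact: ltW.
  have : 0 <= alpha * Bd by apply: mulr_ge0 => //; exact: ltW.
  have : 0 <= 2 * k1 * Bd by apply: mulr_ge0 => //; apply: mulr_ge0.
  lra.
set K := 1 + Q.
have K0 : 0 < K by rewrite /K; lra.
exists ((K + 8 * Bd + 1) * pi); split.
  by apply: mulr_gt0; [lra|exact: pi_gt0].
move=> x y xi Ixi.
have Kb : forall (phi : 'rV[R]_d -> R) x0, C1_torus phi ->
     (\forall z \near x0, v z xi - phi z <= v x0 xi - phi x0) ->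
     enorm (grad phi x0) <= K.
  move=> phi x0 phiC hnear.
  have hs := vsub xi phi x0 Ixi phiC hnear.
  have hc := @coupling_lb R d a I k k0 k1 v x0 xi Bd I1 I2 mk k00 kb (vm x0) Ixi
     (fun eta Ie => vb x0 eta Ie).
  set p := grad phi x0.
  have h1 : alpha * v x0 xi + H x0 p xi - 2 * k1 * Bd <= 0.
    rewrite -lee_fin; apply: le_trans hs.
    by rewrite EFinB; apply: leeD => //; rewrite EFinN.
  have h2 := HB1 x0 p xi Ixi.
  have h3 : - Bd <= v x0 xi by have := vb x0 xi Ixi => /andP[].
  have h4 : alpha * (- Bd) <= alpha * v x0 xi by apply: ler_wpM2l => //; exact: ltW.
  have h5 : enorm p `^ m <= Q.
    rewrite /Q ler_pdivlMr //; rewrite mulrC; lra.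
  case: (leP (enorm p) 1) => hp; first by rewrite /K; lra.
  have := le1r_powR (ltW hp) (ltW m1); rewrite /K; lra.
have ub : forall w, `|v w xi| <= Bd by move=> w; rewrite ler_norml; exact: vb.
have L1 := @visc_lip R d (fun z => v z xi) K Bd K0 Bd0 (vc xi Ixi) (vp xi) ub Kb.
rewrite ler_norml; apply/andP; split.
  have := L1 x y; rewrite enormN; lra.
exact: L1.
Qed.
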